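(* Let $\ell\in\mathbb{N}$, $h\in\bigwedge(V_{2\ell}^* )$, let $G$ be an Eulerian graph with Eulerian orientation $\omega$ and compatible local ordering $\kappa$, and let $\phi:E(G)\to[\ell]$. Let $C$ be a $\kappa$-circuit, let $\omega'$ be obtained from $\omega$ by reversing the orientation of every edge of $C$, and let $\kappa'$ be obtained from $\kappa$ by, at each passage of $C$ through a vertex $v$ via consecutive arcs $a$ (incoming) and $a'$ (outgoing, with $\kappa_v^-(a)+1=\kappa_v^+(a')$), interchanging the labels of $a$ and $a'$ (so $\kappa'$ is compatible with $\omega'$). Then $s_{h,\phi}(G,\omega,\kappa)=s_{h,\phi}(G,\omega',\kappa')$.
   Context: Setup: $V_{2\ell}=\mathbb{C}^{2\ell}$ with standard basis $e_1,\dots,e_{2\ell}$; $f_i=-e_{i+\ell}$ for $i\le\ell$, $f_i=e_{i-\ell}$ for $i>\ell$. $\bigwedge(V_{2\ell}^* )=\bigoplus_{n=0}^{2\ell}\bigwedge^n(V_{2\ell}^* )$, and $h$ applied to an $n$-fold tensor means its skew-symmetric component $h^n$ applied to it. Graphs may have loops and multiple edges; Eulerian means every vertex has even degree. An Eulerian orientation $\omega$ makes in-degree equal out-degree at each vertex (a loop gives one incoming and one outgoing arc). A compatible local ordering $\kappa$ consists at each vertex $v$ of degree $d(v)$ of bijections $\kappa_v^-:\delta^-(v)\to\{1,3,\dots,d(v)-1\}$ and $\kappa_v^+:\delta^+(v)\to\{2,4,\dots,d(v)\}$; $\kappa_v^{-1}(i)$ is the arc at $v$ with label $i$. The $\kappa$-circuits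 are the closed walks $(v_1,a_1,\dots,a_i,v_i,a_{i+1},\dots,v_1)$ with $\kappa^-_{v_i}(a_i)+1=\kappa^+_{v_i}(a_{i+1})$ into which $\kappa$ decomposes the edge set; $c(G,\kappa)$ is their number. For $\phi:E(G)\to[\ell]$ define $s_{h,\phi}(G,\omega,\kappa)=(-1)^{c(G,\kappa)}\sum_{\psi:E(G)\to\{0,\ell\}}\prod_{v\in V(G)} h\big(\bigotimes_{i=1,3,\dots,d(v)-1} e_{(\phi+\psi)(\kappa_v^{-1}(i))}\otimes f_{(\phi+\psi)(\kappa_v^{-1}(i+1))}\big)$, where $(\phi+\psi)(e)=\phi(e)+\psi(e)$. *)

(* Defs.v *)
From HB Require Import structures.
From mathcomp Require Import all_boot all_order all_algebra.
Set Implicit Arguments. Unset Strict Implicit. Unset Printing Implicit Defensive.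
Import Order.TTheory GRing.Theory Num.Theory.
Local Open Scope ring_scope.

Section Defs.
Variable (l : nat) (R : numClosedFieldType).

(* V_{2l} = R^{2l} as row vectors; basis indices are 0-based (0 .. 2l-1). *)
Definition Vec := 'rV[R]_(2 * l).

Definition evec (k : nat) : Vec := \row_(j < 2 * l) ((j : nat) == k)%:R.

(* f_k : 0-based version of  f_i = -e_{i+l} (i <= l),  f_i = e_{i-l} (i > l). *)
Definition fvec (k : nat) : Vec :=
  if (k < l)%N then - evec (k + l) else evec (k - l).

Definition upd n (t : {ffun 'I_n -> Vec}) (i : 'I_n) (x : Vec) : {ffun 'I_n -> Vec} :=
  [ffun j => if j == i then x else t j].

Definition multilinear n (hn : {ffun 'I_n -> Vec} -> R) : Prop :=
  forall (t : {ffun 'I_n -> Vec}) (i : 'I_n) (a : R) (x y : Vec),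
    hn (upd t i (a *: x + y)) = a * hn (upd t i x) + hn (upd t i y).

Definition alternating n (hn : {ffun 'I_n -> Vec} -> R) : Prop :=
  forall (t : {ffun 'I_n -> Vec}) (i j : 'I_n), i != j -> t i = t j -> hn t = 0.

(* an element h of the exterior algebra of V^*: for each n its component h^n,
   an alternating n-linear form on V (automatically 0 for n > 2l). *)
Definition ext_form := forall n : nat, {ffun 'I_n -> Vec} -> R.

Definition is_ext_form (h : ext_form) : Prop :=
  forall n, multilinear (h n) /\ alternating (h n).

(* Graphs: finite vertex type V, finite edge type E, each edge e has two
   endpoints src e, tgt e (loops and multiple edges allowed).
   An orientation w : E -> bool orients e from src e to tgt e if w e,
   and from tgt e to src e otherwise. *)
Variables (V E : finType) (src tgt : E -> V).

Definition deg (v : V) : nat := (#|[pred e | src e == v]| + #|[pred e | tgt e == v]|)%N.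

Definition eulerian_graph : Prop := forall v, ~~ odd (deg v).

Definition hd (w : E -> bool) (e : E) : V := if w e then tgt e else src e.
Definition tl (w : E -> bool) (e : E) : V := if w e then src e else tgt e.

Definition eulerian_orientation (w : E -> bool) : Prop :=
  forall v, #|[pred e | hd w e == v]| = #|[pred e | tl w e == v]|.

(* A local ordering is given by kin e = kappa^-_{head e}(e) and
   kout e = kappa^+_{tail e}(e). *)
Definition compatible (w : E -> bool) (kin kout : E -> nat) : Prop :=
  forall v,
  ({in [pred e | hd w e == v] &, injective kin} /\
   (forall e, hd w e = v -> odd (kin e) /\ (kin e < deg v)%N) /\
   (forall i, odd i -> (i < deg v)%N -> exists e, hd w e = v /\ kin e = i)) /\
  ({in [pred e | tl w e == v] &, injective kout} /\
   (forall e, tl w e = v -> ~~ odd (kout e) /\ (0 < kout e <= deg v)%N) /\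
   (forall i, ~~ odd i -> (0 < i <= deg v)%N -> exists e, tl w e = v /\ kout e = i)).

Definition kinv_in (w : E -> bool) (kin : E -> nat) (v : V) (i : nat) : option E :=
  [pick e | (hd w e == v) && (kin e == i)].
Definition kinv_out (w : E -> bool) (kout : E -> nat) (v : V) (i : nat) : option E :=
  [pick e | (tl w e == v) && (kout e == i)].

(* successor map along kappa-circuits: the arc following the incoming arc e
   at its head is the outgoing arc with label kin e + 1. *)
Definition knext (w : E -> bool) (kin kout : E -> nat) (e : E) : E :=
  odflt e [pick e' | (tl w e' == hd w e) && (kout e' == (kin e).+1)].

(* c(G, kappa): number of kappa-circuits = number of orbits of knext *)
Definition ncirc (w : E -> bool) (kin kout : E -> nat) : nat :=
  fcard (knext w kin kout) (mem predT).

(* (phi + psi)(e), 0-based: phi e in {0..l-1}, psi e in {0, l} *)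
Definition lab (phi : E -> 'I_l) (psi : {ffun E -> bool}) (e : E) : nat :=
  ((phi e : nat) + (if psi e then l else 0))%N.

Definition vfactor (h : ext_form) (w : E -> bool) (kin kout : E -> nat)
    (phi : E -> 'I_l) (psi : {ffun E -> bool}) (v : V) : R :=
  h (deg v) [ffun k : 'I_(deg v) =>
     if odd k.+1 then oapp (fun e => evec (lab phi psi e)) 0 (kinv_in w kin v k.+1)
     else oapp (fun e => fvec (lab phi psi e)) 0 (kinv_out w kout v k.+1)].

Definition s_h_phi (h : ext_form) (phi : E -> 'I_l) (w : E -> bool) (kin kout : E -> nat) : R :=
  (-1) ^+ ncirc w kin kout *
  \sum_(psi : {ffun E -> bool}) \prod_(v : V) vfactor h w kin kout phi psi v.

End Defs.

(* Main.v *)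
Require Import Defs.
From HB Require Import structures.
From mathcomp Require Import all_boot all_order all_algebra.
From mathcomp Require Import zify ring.
Import Order.TTheory GRing.Theory Num.Theory.
Local Open Scope ring_scope.
Unset Printing Implicit Defensive.

Section Alg.
Variables (l : nat) (R : numClosedFieldType) (h : ext_form l R).
Hypothesis Hh : is_ext_form h.

Lemma upd_id n (t : {ffun 'I_n -> Vec l R}) i : upd t i (t i) = t.
Proof. by apply/ffunP=> j; rewrite ffunE; case: eqP => // ->. Qed.

Lemma upd_upd n (t : {ffun 'I_n -> Vec l R}) i x y : upd (upd t i x) i y = upd t i y.
Proof. by apply/ffunP=> j; rewrite !ffunE; case: eqP. Qed.

Lemma upd_com n (t : {ffun 'I_n -> Vec l R}) i j x y : i != j ->
  upd (upd t i x) j y = upd (upd t j y) i x.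
Proof.
move=> ij; apply/ffunP=> k; rewrite !ffunE; case: (eqVneq k j) => [->|]; last by [].
by rewrite eq_sym (negbTE ij).
Qed.

Lemma h_upd0 n (t : {ffun 'I_n -> Vec l R}) i : h n (upd t i 0) = 0.
Proof.
have := (Hh n).1 t i 1 0 0; rewrite scale1r addr0 mul1r.
by rewrite -{1}[h n (upd t i 0)]addr0 => /addrI.
Qed.

Lemma h_updZ n (t : {ffun 'I_n -> Vec l R}) i a x :
  h n (upd t i (a *: x)) = a * h n (upd t i x).
Proof. by have := (Hh n).1 t i a x 0; rewrite addr0 h_upd0 addr0. Qed.

Lemma h_updD n (t : {ffun 'I_n -> Vec l R}) i x y :
  h n (upd t i (x + y)) = h n (upd t i x) + h n (upd t i y).
Proof. by have := (Hh n).1 t i 1 x y; rewrite scale1r mul1r. Qed.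

Lemma h_neg n (t : {ffun 'I_n -> Vec l R}) i : h n (upd t i (- t i)) = - h n t.
Proof. by rewrite -scaleN1r h_updZ upd_id mulN1r. Qed.

Lemma h_swap n (t : {ffun 'I_n -> Vec l R}) i j : i != j ->
  h n (upd (upd t i (t j)) j (t i)) = - h n t.
Proof.
move=> ij.
pose g x y := h n (upd (upd t i x) j y).
have gx : forall x, g x x = 0.
  move=> x; apply: ((Hh n).2 _ i j ij); rewrite !ffunE ?eqxx ?(negbTE ij) // eq_sym (negbTE ij).
have gD1 : forall x y z, g (x + y) z = g x z + g y z.
  by move=> x y z; rewrite /g !(upd_com _ _ _ _ _ _ ij) h_updD.
have gD2 : forall x y z, g z (x + y) = g z x + g z y.
  by move=> x y z; rewrite /g h_updD.
have := gx (t i + t j); rewrite gD1 !gD2 !gx add0r addr0 => /eqP.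
rewrite addr_eq0 => /eqP E.
have -> : h n t = g (t i) (t j) by rewrite /g upd_id upd_id.
by change (g (t j) (t i) = - g (t i) (t j)); rewrite E opprK.
Qed.

End Alg.

Definition swf (Q : nat -> bool) (k : nat) : nat :=
  if Q k./2 then (if odd k then k.-1 else k.+1) else k.

Lemma half_cases k : (k = (k./2).*2 /\ ~~ odd k) \/ (k = (k./2).*2.+1 /\ odd k).
Proof.
have := odd_double_half k; case: (odd k) => /= E; [right|left]; split => //; lia.
Qed.

Section Alg2.
Variables (l : nat) (R : numClosedFieldType) (h : ext_form l R).
Hypothesis Hh : is_ext_form h.

Lemma h_swap_pairs n (Hn : ~~ odd n) (t : nat -> Vec l R) (Q : nat -> bool) :
  h n [ffun k : 'I_n => t (swf Q k)] =
  (-1) ^+ count Q (iota 0 n./2) * h n [ffun k : 'I_n => t k].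
Proof.
pose tb b := [ffun k : 'I_n => t (if (k./2 < b)%N then swf Q k else k)].
have step : forall b, (b <= n./2)%N -> h n (tb b) = (-1) ^+ count Q (iota 0 b) * h n (tb 0%N).
  elim=> [|b IH] Hb; first by rewrite /= expr0 mul1r.
  have -> : iota 0 b.+1 = iota 0 b ++ [:: b] by rewrite -addn1 iotaD.
  rewrite count_cat /= addn0 exprD mulrAC -IH; last by lia.
  have Hb2 : (b.*2.+1 < n)%N.
    by move: Hb; rewrite geq_half_double doubleS; lia.
  case QB: (Q b); last first.
    rewrite expr0 mulr1; congr (h n _); apply/ffunP=> k; rewrite !ffunE.
    case: (ltngtP k./2 b) => Hkb.
    - by have -> : (k./2 < b.+1)%N by lia.
    - by have -> : (k./2 < b.+1)%N = false by lia; have -> : (k./2 < b)%N = false by lia.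
    - by rewrite Hkb ltnSn /swf Hkb QB.
  pose i := Ordinal (ltnW Hb2). pose j := Ordinal Hb2.
  have ij : i != j by rewrite -val_eqE /= -(eqn_add2r 0) addn0 eq_sym -{2}[b.*2]addn0; lia.
  rewrite expr1 mulrN1 -(h_swap _ _ _ Hh _ _ _ _ ij); congr (h n _); apply/ffunP=> k; rewrite !ffunE.
  have hi : (i./2 = b)%N by rewrite /= doubleK.
  have hj : (j./2 = b)%N by rewrite [nat_of_ord j]/= -uphalfE uphalf_double.
  rewrite hi hj ltnn.
  case: (eqVneq k j) => [->|kj].
    by rewrite hj ltnSn /swf hj QB /= odd_double.
  case: (eqVneq k i) => [->|ki].
    by rewrite hi ltnSn /swf hi QB /= odd_double.
  case: (ltngtP k./2 b) => Hkb.
  - by have -> : (k./2 < b.+1)%N by lia.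
  - by have -> : (k./2 < b.+1)%N = false by lia; have -> : (k./2 < b)%N = false by lia.
  - case: (half_cases k) => [[Ek _]|[Ek _]].
    + by move: ki; rewrite -val_eqE /= Ek Hkb eqxx.
    + by move: kj; rewrite -val_eqE /= Ek Hkb eqxx.
have := step n./2 (leqnn _).
have -> : tb n./2 = [ffun k : 'I_n => t (swf Q k)].
  apply/ffunP=> k; rewrite !ffunE ltn_half_double even_halfK // ltn_ord //.
have -> : tb 0%N = [ffun k : 'I_n => t k] by apply/ffunP=> k; rewrite !ffunE.
by [].
Qed.

Lemma prod_neg1 (V : finType) (d : V -> nat) (c1 c2 : V -> nat -> Vec l R)
  (v0 : V) (k0 : nat) (hk0 : (k0 < d v0)%N)
  (H : forall v k, (k < d v)%N -> c1 v k = (if (v == v0) && (k == k0) then -1 else 1) *: c2 v k) :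
  \prod_v h (d v) [ffun k : 'I_(d v) => c1 v k] = - \prod_v h (d v) [ffun k : 'I_(d v) => c2 v k].
Proof.
rewrite (bigD1 v0) //= [in RHS](bigD1 v0) //= -mulNr; congr (_ * _).
  rewrite -(h_neg _ _ _ Hh _ _ (Ordinal hk0)); congr (h _ _); apply/ffunP=> k; rewrite !ffunE.
  rewrite H // eqxx /=; case: (eqVneq k (Ordinal hk0)) => [->|kk]; first by rewrite eqxx scaleN1r.
  have -> : (nat_of_ord k == k0) = false.
    by apply/negbTE; move: kk; rewrite -val_eqE.
  by rewrite scale1r.
apply: eq_bigr=> v vv0; congr (h _ _); apply/ffunP=> k; rewrite !ffunE H //.
by rewrite (negbTE vv0) scale1r.
Qed.

End Alg2.

Set Implicit Arguments. Unset Strict Implicit.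

Lemma pick_uniq (T : finType) (P : pred T) y : (forall z, P z = (z == y)) -> [pick z | P z] = Some y.
Proof. by move=> H; case: pickP => [z|/(_ y)]; rewrite H ?eqxx // => /eqP ->. Qed.

Section Graph.
Variables (V E : finType) (src tgt : E -> V).
Variables (w : E -> bool) (kin kout : E -> nat).
Hypothesis Hk : compatible src tgt w kin kout.
Local Notation hdw := (hd src tgt w).
Local Notation tlw := (tl src tgt w).
Local Notation dg := (deg src tgt).

Lemma in_inj x y : hdw x = hdw y -> kin x = kin y -> x = y.
Proof. move=> H1 H2; have [[I _] _] := Hk (hdw y); apply: I => //; rewrite inE ?H1 //. Qed.
Lemma out_inj x y : tlw x = tlw y -> kout x = kout y -> x = y.
Proof. move=> H1 H2; have [_ [I _]] := Hk (tlw y); apply: I => //; rewrite inE ?H1 //. Qed.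
Lemma in_rng e : odd (kin e) /\ (kin e < dg (hdw e))%N.
Proof. by have [[_ [H _]] _] := Hk (hdw e); apply: H. Qed.
Lemma out_rng e : ~~ odd (kout e) /\ (0 < kout e <= dg (tlw e))%N.
Proof. by have [_ [_ [H _]]] := Hk (tlw e); apply: H. Qed.
Lemma in_surj v i : odd i -> (i < dg v)%N -> exists e, hdw e = v /\ kin e = i.
Proof. by have [[_ [_ H]] _] := Hk v; apply: H. Qed.
Lemma out_surj v i : ~~ odd i -> (0 < i <= dg v)%N -> exists e, tlw e = v /\ kout e = i.
Proof. by have [_ [_ [_ H]]] := Hk v; apply: H. Qed.

Lemma kin_some v i x : hdw x = v -> kin x = i -> kinv_in src tgt w kin v i = Some x.
Proof.
move=> <- <-; apply: pick_uniq => z; apply/andP/eqP => [[/eqP a /eqP b]|->]; last by [].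
exact: in_inj.
Qed.
Lemma kout_some v i x : tlw x = v -> kout x = i -> kinv_out src tgt w kout v i = Some x.
Proof.
move=> <- <-; apply: pick_uniq => z; apply/andP/eqP => [[/eqP a /eqP b]|->]; last by [].
exact: out_inj.
Qed.

Local Notation N := (knext src tgt w kin kout).

Lemma N_spec e : tlw (N e) = hdw e /\ kout (N e) = (kin e).+1.
Proof.
have [o lt] := in_rng e.
have [e' [H1 H2]] : exists e', tlw e' = hdw e /\ kout e' = (kin e).+1.
  by apply: out_surj; rewrite /= ?negbK.
suff -> : N e = e' by [].
rewrite /knext (@pick_uniq _ _ e') // => z /=; apply/andP/eqP => [[/eqP a /eqP b]|->]; last first.
  by rewrite H1 H2.
by apply: out_inj; rewrite ?a ?b.
Qed.

Lemma N_inj : injective N.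
Proof.
move=> x y Hxy; have [a1 b1] := N_spec x; have [a2 b2] := N_spec y.
apply: in_inj; first by rewrite -a1 -a2 Hxy.
by apply/succn_inj; rewrite -b1 -b2 Hxy.
Qed.


Lemma kin_spec w0 kin0 v i y : kinv_in src tgt w0 kin0 v i = Some y ->
  hd src tgt w0 y = v /\ kin0 y = i.
Proof. by rewrite /kinv_in; case: pickP => // z /andP[/eqP a /eqP b] [<-]. Qed.
Lemma kout_spec w0 kout0 v i y : kinv_out src tgt w0 kout0 v i = Some y ->
  tl src tgt w0 y = v /\ kout0 y = i.
Proof. by rewrite /kinv_out; case: pickP => // z /andP[/eqP a /eqP b] [<-]. Qed.

Variable c0 : E.
Local Notation C := (fconnect N c0).
Local Notation P := (finv N).

Lemma NP e : N (P e) = e. Proof. exact: (f_finv N_inj). Qed.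
Lemma PN e : P (N e) = e. Proof. exact: (finv_f N_inj). Qed.
Lemma CN e : C (N e) = C e. Proof. by rewrite -same_fconnect1_r //; apply: N_inj. Qed.
Lemma CP e : C (P e) = C e. Proof. by rewrite -{2}(NP e) CN. Qed.
Lemma hdP e : hdw (P e) = tlw e. Proof. by rewrite -{2}(NP e) (N_spec (P e)).1. Qed.
Lemma kinP e : kout e = (kin (P e)).+1. Proof. by rewrite -{1}(NP e) (N_spec (P e)).2. Qed.

Lemma OOUT v i p : kinv_in src tgt w kin v i = Some p -> kinv_out src tgt w kout v i.+1 = Some (N p).
Proof.
move=> /kin_spec [a b]; apply: kout_some; first by rewrite (N_spec p).1.
by rewrite (N_spec p).2 b.
Qed.

Variables (w' : E -> bool) (kin' kout' : E -> nat).
Hypothesis Hw' : forall e, w' e = (if C e then ~~ w e else w e).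
Hypothesis Hout : forall e, ~~ C e -> kin' e = kin e /\ kout' e = kout e.
Hypothesis Hin : forall a, C a -> kout' a = kout (N a) /\ kin' (N a) = kin a.

Lemma hd'E e : hd src tgt w' e = if C e then tlw e else hdw e.
Proof. by rewrite /hd /tl Hw'; case: (C e); case: (w e). Qed.
Lemma tl'E e : tl src tgt w' e = if C e then hdw e else tlw e.
Proof. by rewrite /hd /tl Hw'; case: (C e); case: (w e). Qed.
Lemma kin'E e : kin' e = if C e then kin (P e) else kin e.
Proof.
case Ce: (C e); last by rewrite (Hout (negbT Ce)).1.
by rewrite -{1}(NP e) (@Hin (P e) (etrans (CP e) Ce)).2.
Qed.
Lemma kout'E e : kout' e = if C e then kout (N e) else kout e.
Proof.
case Ce: (C e); last by rewrite (Hout (negbT Ce)).2.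
by rewrite (Hin Ce).1.
Qed.

Lemma NIN v i p : kinv_in src tgt w kin v i = Some p ->
  kinv_in src tgt w' kin' v i = Some (if C p then N p else p).
Proof.
move=> /kin_spec [hp kp]; apply: pick_uniq => z /=; rewrite hd'E kin'E.
case Cp: (C p); apply/andP/eqP.
- case Cz: (C z) => -[/eqP a /eqP b].
    have Pz : P z = p by apply: in_inj; rewrite ?hdP ?a ?hp ?b ?kp.
    by rewrite -[z]NP Pz.
  have zp : z = p by apply: in_inj; rewrite ?a ?hp ?b ?kp.
  by rewrite zp Cp in Cz.
- by move=> ->; rewrite CN Cp PN (N_spec p).1 hp kp.
- case Cz: (C z) => -[/eqP a /eqP b].
    have zp : P z = p by apply: in_inj; rewrite ?hdP ?a ?hp ?b ?kp.
    by rewrite -zp CP Cz in Cp.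
  by apply: in_inj; rewrite ?a ?hp ?b ?kp.
- by move=> ->; rewrite Cp hp kp.
Qed.

Lemma NOUT v i p : kinv_in src tgt w kin v i = Some p ->
  kinv_out src tgt w' kout' v i.+1 = Some (if C p then p else N p).
Proof.
move=> /kin_spec [hp kp]; apply: pick_uniq => z /=; rewrite tl'E kout'E.
have [tNp kNp] := N_spec p.
case Cp: (C p); apply/andP/eqP.
- case Cz: (C z) => -[/eqP a /eqP b].
    apply: in_inj; first by rewrite a hp.
    by apply: succn_inj; rewrite -(N_spec z).2 b kp.
  have zp : z = N p by apply: out_inj; rewrite ?a ?tNp ?hp ?b ?kNp ?kp.
  by rewrite zp CN Cp in Cz.
- by move=> ->; rewrite Cp hp (N_spec p).2 kp.
- case Cz: (C z) => -[/eqP a /eqP b].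
    have zp : z = p.
      apply: in_inj; first by rewrite a hp.
      by apply: succn_inj; rewrite -(N_spec z).2 b kp.
    by rewrite -zp Cz in Cp.
  by apply: out_inj; rewrite ?a ?tNp ?hp ?b ?kNp ?kp.
- by move=> ->; rewrite CN Cp tNp hp kNp kp.
Qed.

Lemma knext'E e : knext src tgt w' kin' kout' e = if C e then P e else N e.
Proof.
have H : kinv_in src tgt w kin (hd src tgt w' e) (kin' e) = Some (if C e then P e else e).
  rewrite hd'E kin'E; case Ce: (C e); apply: kin_some => //; exact: hdP.
have := NOUT H; rewrite /kinv_out /knext => ->.
by case Ce: (C e); rewrite /= ?CP ?Ce ?NP.
Qed.

Lemma knext'_inj : injective (knext src tgt w' kin' kout').
Proof.
move=> x y; rewrite !knext'E; case Cx: (C x); case Cy: (C y).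
- by move/(finv_inj N_inj).
- by move=> E1; move: Cx; rewrite -CP E1 CN Cy.
- by move=> E1; move: Cy; rewrite -CP -E1 CN Cx.
- exact: N_inj.
Qed.

Lemma ncirc_eq : ncirc src tgt w' kin' kout' = ncirc src tgt w kin kout.
Proof.
rewrite /ncirc; apply: eq_n_comp => x y; apply/idP/idP; apply: connect_sub => {}x {}y /eqP <-.
- rewrite knext'E; case: (C x); last exact: fconnect1.
  by rewrite (fconnect_sym N_inj) -{2}(NP x) fconnect1.
- case Cx: (C x); last by have := fconnect1 (knext src tgt w' kin' kout') x; rewrite knext'E Cx.
  rewrite (fconnect_sym knext'_inj).
  have := fconnect1 (knext src tgt w' kin' kout') (N x); rewrite knext'E CN Cx PN //.
Qed.

End Graph.

Unset Implicit Arguments.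

Lemma fvec_lo l (R : numClosedFieldType) i : (i < l)%N -> fvec l R i = - evec l R (i + l).
Proof. by rewrite /fvec => ->. Qed.
Lemma fvec_hi l (R : numClosedFieldType) i : fvec l R (i + l) = evec l R i.
Proof. by rewrite /fvec ltnNge leq_addl /= addnK. Qed.

Section Main.
Variables (l : nat) (R : numClosedFieldType) (h : ext_form l R).
Hypothesis Hh : is_ext_form h.
Variables (V E : finType) (src tgt : E -> V).
Hypothesis HG : eulerian_graph src tgt.
Variables (w : E -> bool) (kin kout : E -> nat).
Hypothesis Hk : compatible src tgt w kin kout.
Variable phi : E -> 'I_l.
Local Notation hdw := (hd src tgt w).
Local Notation tlw := (tl src tgt w).
Local Notation dg := (deg src tgt).
Local Notation N := (knext src tgt w kin kout).

Definition cellX (X : pred E) (psi : {ffun E -> bool}) (v : V) (k : nat) : Vec l R :=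
  if odd k.+1 then
    oapp (fun e => if X e then fvec l R (lab phi psi e) else evec l R (lab phi psi e)) 0
      (kinv_in src tgt w kin v k.+1)
  else
    oapp (fun e => if X e then evec l R (lab phi psi e) else fvec l R (lab phi psi e)) 0
      (kinv_out src tgt w kout v k.+1).

Definition SX (X : pred E) : R :=
  \sum_(psi : {ffun E -> bool}) \prod_v h (dg v) [ffun k : 'I_(dg v) => cellX X psi v k].

Lemma SX_ext X Y : X =1 Y -> SX X = SX Y.
Proof.
move=> XY; apply: eq_bigr => psi _; apply: eq_bigr => v _; congr (h _ _).
by apply/ffunP=> k; rewrite !ffunE /cellX; case: (odd _);
  [case: kinv_in => //= e | case: kinv_out => //= e]; rewrite XY.
Qed.

Lemma SX0 : \sum_(psi : {ffun E -> bool}) \prod_v vfactor src tgt h w kin kout phi psi v = SX pred0.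
Proof.
apply: eq_bigr => psi _; apply: eq_bigr => v _; rewrite /vfactor; congr (h _ _).
Qed.

Lemma par1 k x : odd k.+1 -> (k == (kout x).-1) = false.
Proof.
move=> Ho; apply/negbTE/eqP => kk; have [eo [/andP [pos _]]] := out_rng Hk x.
by move: Ho; rewrite kk prednK // (negbTE eo).
Qed.
Lemma par2 k x : ~~ odd k.+1 -> (k == (kin x).-1) = false.
Proof.
move=> Ho; apply/negbTE/eqP => kk; have [eo _] := in_rng Hk x.
have pos : (0 < kin x)%N by move: eo; case: (kin x).
by move: Ho; rewrite kk prednK // eo.
Qed.
Lemma slot1 v k e x : kinv_in src tgt w kin v k.+1 = Some e -> e != x ->
  (v == hdw x) && (k == (kin x).-1) = false.
Proof.
move=> Ein ex; apply/negbTE/andP => -[/eqP vx /eqP kk].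
have [eo _] := in_rng Hk x; have pos : (0 < kin x)%N by move: eo; case: (kin x).
have := kin_some Hk (esym vx) (esym (etrans (f_equal S kk) (prednK pos))).
by rewrite Ein => -[ex']; rewrite ex' eqxx in ex.
Qed.
Lemma slot2 v k e x : kinv_out src tgt w kout v k.+1 = Some e -> e != x ->
  (v == tlw x) && (k == (kout x).-1) = false.
Proof.
move=> Ein ex; apply/negbTE/andP => -[/eqP vx /eqP kk].
have [_ [/andP [pos _]]] := out_rng Hk x.
have := kout_some Hk (esym vx) (esym (etrans (f_equal S kk) (prednK pos))).
by rewrite Ein => -[ex']; rewrite ex' eqxx in ex.
Qed.

Lemma flip_step X x : ~~ X x -> SX (fun e => (e == x) || X e) = - SX X.
Proof.
move=> Xx; rewrite /SX.
pose fl (psi : {ffun E -> bool}) := [ffun e => if e == x then ~~ psi x else psi e].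
have flK : involutive fl.
  by move=> psi; apply/ffunP=> e; rewrite !ffunE; case: (eqVneq e x) => [->|]; rewrite ?eqxx ?negbK.
rewrite (reindex_inj (inv_inj flK)) /= -sumrN; apply: eq_bigr => psi _.
set q := fl psi.
have qx : q x = ~~ psi x by rewrite ffunE eqxx.
have qe : forall e, e != x -> lab phi q e = lab phi psi e.
  by move=> e ex; rewrite /lab ffunE (negbTE ex).
have [eox [ltx]] := in_rng Hk x. have [eoo [/andP [poso leo]]] := out_rng Hk x.
have posi : (0 < kin x)%N by move: eox; case: (kin x).
apply: (prod_neg1 _ _ _ Hh _ _ _ _ (if q x then tlw x else hdw x)
          (if q x then (kout x).-1 else (kin x).-1)).
  by case: (q x); lia.
move=> v k kv; rewrite /cellX.
case Hodd: (odd k.+1).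
- case Ein: (kinv_in _ _ _ _ v k.+1) => [e|]; last by rewrite /= scaler0.
  have [he ke] := kin_spec Ein; rewrite /=.
  case: (eqVneq e x) => [exx|ex].
    subst e; rewrite (negbTE Xx) /= /lab qx.
    case Px: (psi x) => /=.
      by rewrite he ke /= !eqxx /= scaleN1r addn0 fvec_lo.
    by rewrite par1 // andbF scale1r addn0 fvec_hi.
  rewrite /= qe //.
  case: (q x); first by rewrite par1 // andbF scale1r.
  by rewrite (slot1 _ _ _ _ Ein ex) scale1r.
- case Ein: (kinv_out _ _ _ _ v k.+1) => [e|]; last by rewrite /= scaler0.
  have [he ke] := kout_spec Ein; rewrite /=.
  case: (eqVneq e x) => [exx|ex].
    subst e; rewrite (negbTE Xx) /= /lab qx.
    case Px: (psi x) => /=.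
      by rewrite par2 ?Hodd // andbF scale1r addn0 fvec_hi.
    by rewrite he ke /= !eqxx /= scaleN1r addn0 fvec_lo // opprK.
  rewrite /= qe //.
  case: (q x); last by rewrite par2 ?Hodd // andbF scale1r.
  by rewrite (slot2 _ _ _ _ Ein ex) scale1r.
Qed.


Lemma SX_seq s : uniq s -> SX (fun e => e \in s) = (-1) ^+ size s * SX pred0.
Proof.
elim: s => [|x s IH] /=.
  by move=> _; rewrite expr0 mul1r; apply: SX_ext => e; rewrite in_nil.
move=> /andP [xs us].
rewrite (@SX_ext _ (fun e => (e == x) || (e \in s))); last by move=> e; rewrite in_cons.
by rewrite flip_step // IH // exprS mulN1r mulNr.
Qed.

Variable c0 : E.
Local Notation C := (fconnect N c0).

Lemma SC : SX (fun e => C e) = (-1) ^+ #|[pred e | C e]| * SX pred0.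
Proof.
rewrite cardE -SX_seq ?enum_uniq //; apply: SX_ext => e.
by rewrite mem_enum inE.
Qed.

Variables (w' : E -> bool) (kin' kout' : E -> nat).
Hypothesis Hw' : forall e, w' e = (if C e then ~~ w e else w e).
Hypothesis Hout : forall e, ~~ C e -> kin' e = kin e /\ kout' e = kout e.
Hypothesis Hin : forall a, C a -> kout' a = kout (N a) /\ kin' (N a) = kin a.

Definition Qv (v : V) (j : nat) : bool := C (odflt c0 (kinv_in src tgt w kin v j.*2.+1)).

Definition cellN (psi : {ffun E -> bool}) (v : V) (k : nat) : Vec l R :=
  if odd k.+1 then oapp (fun e => evec l R (lab phi psi e)) 0 (kinv_in src tgt w' kin' v k.+1)
  else oapp (fun e => fvec l R (lab phi psi e)) 0 (kinv_out src tgt w' kout' v k.+1).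

Lemma cellN_swf psi v k : (k < dg v)%N -> cellN psi v k = cellX (fun e => C e) psi v (swf (Qv v) k).
Proof.
move=> kv; have ev := HG v.
have dE := even_halfK ev.
rewrite /cellN /cellX /swf.
case: (half_cases k) => [[Ek ok]|[Ek ok]]; set q := k./2 in Ek *.
- have lt : (q.*2.+1 < dg v)%N by move: kv; rewrite -dE Ek -!mul2n; lia.
  have od : odd q.*2.+1 by rewrite /= odd_double.
  have [p [hp kp]] := in_surj Hk od lt.
  have Ein := kin_some Hk hp kp.
  have QE : Qv v q = C p by rewrite /Qv Ein.
  rewrite Ek /= odd_double /= (NIN Hk Hw' Hout Hin Ein) QE.
  case Cp: (C p) => /=.
    by rewrite negbK odd_double /= (OOUT Hk Ein) /= (CN Hk) Cp.
  by rewrite odd_double /= Ein /= Cp.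
- have od : odd q.*2.+1 by rewrite /= odd_double.
  have lt : (q.*2.+1 < dg v)%N by rewrite -Ek.
  have [p [hp kp]] := in_surj Hk od lt.
  have Ein := kin_some Hk hp kp.
  have QE : Qv v q = C p by rewrite /Qv Ein.
  rewrite Ek /= negbK odd_double /= (NOUT Hk Hw' Hout Hin Ein) QE.
  case Cp: (C p) => /=.
    by rewrite odd_double /= Ein /= Cp.
  by rewrite negbK odd_double /= (OOUT Hk Ein) /= (CN Hk) Cp.
Qed.


Lemma count_Qv v : count (Qv v) (iota 0 (dg v)./2) = #|[pred e | C e && (hdw e == v)]|.
Proof.
have ev := HG v; have dE := even_halfK ev.
pose g j := odflt c0 (kinv_in src tgt w kin v j.*2.+1).
have gP : forall j, (j < (dg v)./2)%N -> hdw (g j) = v /\ kin (g j) = j.*2.+1.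
  move=> j jm.
  have od : odd j.*2.+1 by rewrite /= odd_double.
  have lt : (j.*2.+1 < dg v)%N by move: jm; rewrite -{2}dE -!mul2n; lia.
  have [p [hp kp]] := in_surj Hk od lt.
  by rewrite /g (kin_some Hk hp kp).
have -> : count (Qv v) (iota 0 (dg v)./2) = count (fun e => C e) (map g (iota 0 (dg v)./2)).
  by rewrite count_map.
have pe : perm_eq (map g (iota 0 (dg v)./2)) (enum [pred e | hdw e == v]).
  apply: uniq_perm; rewrite ?enum_uniq //.
    rewrite map_inj_in_uniq ?iota_uniq // => j1 j2; rewrite !mem_iota /= !add0n => j1m j2m gg.
    have [_ k1] := gP _ j1m; have [_ k2] := gP _ j2m.
    by move: k1; rewrite gg k2 => -[/eqP]; rewrite -!mul2n; lia.
  move=> e; rewrite mem_enum inE; apply/mapP/eqP => [[j]|he].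
    by rewrite mem_iota add0n => /andP [_ jm] ->; rewrite (gP _ jm).1.
  have [eo lt] := in_rng Hk e.
  exists (kin e)./2.
    rewrite mem_iota add0n /=; rewrite he in lt; move: lt; rewrite -{1}dE.
    case: (half_cases (kin e)) => [[E1 _]|[E1 _]]; first by rewrite E1 in eo; rewrite odd_double in eo.
    by rewrite {1}E1 -!mul2n; lia.
  case: (half_cases (kin e)) => [[E1 _]|[E1 _]]; first by rewrite E1 odd_double in eo.
  by rewrite /g -E1 (kin_some Hk he erefl).
rewrite (permP pe) cardE /enum_mem !size_filter count_filter.
by apply: eq_count => e; rewrite !inE andbC.
Qed.

Lemma sum_count : (\sum_v #|[pred e | C e && (hdw e == v)]| = #|[pred e | C e]|)%N.
Proof.
rewrite -sum1_card (partition_big (hd src tgt w) predT) //=.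
apply: eq_bigr => v _; rewrite -sum1_card; apply: eq_bigl => e; by rewrite !inE.
Qed.

Lemma main_eq : \sum_(psi : {ffun E -> bool}) \prod_v vfactor src tgt h w' kin' kout' phi psi v =
  \sum_(psi : {ffun E -> bool}) \prod_v vfactor src tgt h w kin kout phi psi v.
Proof.
rewrite SX0.
transitivity (\sum_(psi : {ffun E -> bool}) \prod_v
   ((-1) ^+ count (Qv v) (iota 0 (dg v)./2) * h (dg v) [ffun k : 'I_(dg v) => cellX (fun e => C e) psi v k])).
  apply: eq_bigr => psi _; apply: eq_bigr => v _; rewrite /vfactor.
  have -> : [ffun k : 'I_(dg v) => if odd k.+1
     then oapp (fun e => evec l R (lab phi psi e)) 0 (kinv_in src tgt w' kin' v k.+1)
     else oapp (fun e => fvec l R (lab phi psi e)) 0 (kinv_out src tgt w' kout' v k.+1)]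
     = [ffun k : 'I_(dg v) => cellX (fun e => C e) psi v (swf (Qv v) k)].
    apply/ffunP=> k; rewrite !ffunE; have := (@cellN_swf psi v k (ltn_ord k)); by rewrite /cellN => ->.
  exact: (h_swap_pairs _ _ _ Hh _ (HG v) (cellX (fun e => C e) psi v) (Qv v)).
rewrite (eq_bigr (fun psi => (\prod_v (-1) ^+ count (Qv v) (iota 0 (dg v)./2)) *
   \prod_v h (dg v) [ffun k : 'I_(dg v) => cellX (fun e => C e) psi v k])); last first.
  by move=> psi _; rewrite big_split.
rewrite -mulr_sumr prodrXr.
rewrite (eq_bigr (fun v => #|[pred e | C e && (hdw e == v)]|)); last by move=> v _; rewrite count_Qv.
rewrite sum_count.
rewrite -/(SX (fun e => C e)) SC mulrA -exprMn mulN1r opprK expr1n mul1r //.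
Qed.

End Main.

Theorem lemma1 (l : nat) (R : numClosedFieldType) (h : ext_form l R)
  (Hh : is_ext_form h)
  (V E : finType) (src tgt : E -> V) (HG : eulerian_graph src tgt)
  (w : E -> bool) (Hw : eulerian_orientation src tgt w)
  (kin kout : E -> nat) (Hk : compatible src tgt w kin kout)
  (phi : E -> 'I_l)
  (c0 : E) (* the kappa-circuit C is the knext-orbit of the edge c0 *)
  (w' : E -> bool)
  (Hw' : forall e, w' e = (if fconnect (knext src tgt w kin kout) c0 e then ~~ w e else w e))
  (kin' kout' : E -> nat)
  (Hout : forall e, ~~ fconnect (knext src tgt w kin kout) c0 e ->
            kin' e = kin e /\ kout' e = kout e)
  (Hin : forall a, fconnect (knext src tgt w kin kout) c0 a ->
            kout' a = kout (knext src tgt w kin kout a) /\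
            kin' (knext src tgt w kin kout a) = kin a) :
  s_h_phi src tgt h phi w kin kout = s_h_phi src tgt h phi w' kin' kout'.
Proof.
rewrite /s_h_phi (ncirc_eq Hk Hw' Hout Hin).
congr (_ * _); symmetry; exact: (main_eq _ _ _ Hh _ _ _ _ HG _ _ _ Hk phi c0 _ _ _ Hw' Hout Hin).
Qed.
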